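(* Let $\Sigma$ be an alphabet with $|\Sigma|\ge3$, $k\ge1$, and $f\colon(\Sigma^* )^k\to\Sigma^*$ RCP. Then exactly one of the following holds: ($C_1$) there exists $b\in\Sigma$ such that $f(x_1,\ldots,x_k)\in b\Sigma^*$ for all $x_1,\ldots,x_k\in\Sigma^*$; ($C_2$) there exists $i\in\{1,\ldots,k\}$ such that $f(x_1,\ldots,x_k)\in x_i\Sigma^*$ for all $x_1,\ldots,x_k\in\Sigma^*$; ($C_3$) $f(x_1,\ldots,x_k)=\varepsilon$ for all $x_1,\ldots,x_k\in\Sigma^*$.
   Context: $\Sigma^*$ is the free monoid over $\Sigma$ (finite words, concatenation, empty word $\varepsilon$). For a word $w$, $w\Sigma^*$ denotes the set of words having $w$ as a prefix. A function $f\colon(\Sigma^* )^k\to\Sigma^*$ is RCP if for every monoid morphism $\varphi\colon\Sigma^*\to\Sigma^*$ and all $u_1,\ldots,u_k,v_1,\ldots,v_k$ with $\varphi(u_i)=\varphi(v_i)$ for all $i$, we have $\varphi(f(u_1,\ldots,u_k))=\varphi(f(v_1,\ldots,v_k))$. *)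

(* Defs.v *)
From mathcomp Require Import all_boot.
Set Implicit Arguments. Unset Strict Implicit. Unset Printing Implicit Defensive.

Definition is_monoid_morphism (S : Type) (phi : seq S -> seq S) : Prop :=
  phi [::] = [::] /\ forall u v : seq S, phi (u ++ v) = phi u ++ phi v.

(* A k-ary word function is represented as f : ('I_k -> seq S) -> seq S. *)
Definition RCP (S : Type) (k : nat) (f : ('I_k -> seq S) -> seq S) : Prop :=
  forall (phi : seq S -> seq S), is_monoid_morphism phi ->
  forall u v : 'I_k -> seq S, (forall i, phi (u i) = phi (v i)) ->
    phi (f u) = phi (f v).

(* "w is in p Sigma^*", i.e. p is a prefix of w *)
Definition has_prefix (S : Type) (p w : seq S) : Prop := exists r, w = p ++ r.

(* Main.v *)
Require Import Defs.
From mathcomp Require Import all_boot.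
Set Implicit Arguments. Unset Strict Implicit. Unset Printing Implicit Defensive.

Section Words.
Variable Sigma : finType.
Implicit Types (a b c p q r s t u v : Sigma) (w : seq Sigma).

Definition hom (h : Sigma -> seq Sigma) w := flatten (map h w).

Lemma hom_morph h : is_monoid_morphism (hom h).
Proof. by split => // x y; rewrite /hom map_cat flatten_cat. Qed.

Lemma hom_cons h c w : hom h (c :: w) = h c ++ hom h w.
Proof. by []. Qed.

Lemma hom_cat h w1 w2 : hom h (w1 ++ w2) = hom h w1 ++ hom h w2.
Proof. by rewrite /hom map_cat flatten_cat. Qed.

Lemma hom1 h c : hom h [:: c] = h c.
Proof. by rewrite hom_cons cats0. Qed.

Definition mr u v c := if c == u then v else c.
Definition lift1 (g : Sigma -> Sigma) c := [:: g c].
Definition mrg u v := lift1 (mr u v).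
Definition gfilt (P : pred Sigma) c := if P c then [:: c] else [::].
Definition ers s := gfilt (predC1 s).
Definition prj p q := gfilt (fun c => (c == p) || (c == q)).
Definition sbs s w0 c := if c == s then w0 else [:: c].

Lemma hom_map g w : hom (lift1 g) w = map g w.
Proof. by elim: w => //= c w IH; rewrite hom_cons IH. Qed.

Lemma hom_mrg u v w : hom (mrg u v) w = map (mr u v) w.
Proof. exact: hom_map. Qed.

Lemma filt_two r s w : r != s -> filter (predC1 r) w = [::] ->
  filter (predC1 s) w = [::] -> w = [::].
Proof.
case: w => //= c w Hrs; case: (eqVneq c r) => [->|]//= _.
by rewrite Hrs.
Qed.

Lemma ers_head s w1 w2 r : filter (predC1 s) w1 = filter (predC1 s) w2 ->
  ohead w2 = Some r -> r != s -> ohead w1 = Some r \/ ohead w1 = Some s.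
Proof.
case: w2 => //= c w2 + [<-] Hcs; rewrite Hcs.
case: w1 => //= d w1; case: (eqVneq d s) => [->|Hds] /=; first by right.
by move=> [->]; left.
Qed.

Lemma sbs_head s w0 w1 w2 r : hom (sbs s w0) w1 = hom (sbs s w0) w2 ->
  ohead w2 = Some r -> r != s -> w0 != [::] ->
  ohead w1 = Some r \/ (ohead w1 = Some s /\ ohead w0 = Some r).
Proof.
case: w2 => //= c w2 + [<-] Hcs Hw0; rewrite hom_cons /sbs (negbTE Hcs) /=.
case: w1 => //= d w1; rewrite hom_cons /sbs.
case: (eqVneq d s) => [->|Hds] /=.
  by case: w0 Hw0 => //= e w0 _ [->]; right.
by move=> [->]; left.
Qed.

Lemma mrg_head u v w1 c : omap (mr u v) (ohead w1) = Some c ->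
  c != v -> ohead w1 = Some c.
Proof.
case: w1 => //= d w1 [<-]; rewrite /mr.
by case: (eqVneq d u) => [->|Hdu]; rewrite ?eqxx // (negbTE Hdu).
Qed.

Lemma hom_gfilt P w : hom (gfilt P) w = filter P w.
Proof. by elim: w => //= c w IH; rewrite hom_cons IH /gfilt; case: (P c). Qed.

Lemma hom_sbs_id s w0 w : s \notin w -> hom (sbs s w0) w = w.
Proof.
elim: w => //= c w IH; rewrite in_cons negb_or => /andP[Hc Hw].
by rewrite hom_cons IH // /sbs eq_sym (negbTE Hc).
Qed.

Lemma hom_sbs1 s w0 : hom (sbs s w0) [:: s] = w0.
Proof. by rewrite hom1 /sbs eqxx. Qed.

Lemma hom_sbs_nil s w0 w : w0 != [::] -> hom (sbs s w0) w = [::] -> w = [::].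
Proof.
case: w => //= c w H0; rewrite hom_cons /sbs; case: eqP => _ //.
by case: w0 H0.
Qed.

Lemma map_nil (g : Sigma -> Sigma) w : map g w = [::] -> w = [::].
Proof. by case: w. Qed.

Lemma ohead_map (g : Sigma -> Sigma) w : ohead (map g w) = omap g (ohead w).
Proof. by case: w. Qed.

Lemma third a b : 2 < #|Sigma| -> exists c, c != a /\ c != b.
Proof.
move=> H; case: (pickP (fun c => (c != a) && (c != b))) => [c /andP[]|H0].
  by exists c.
have: #|Sigma| <= 2.
  apply: leq_trans (card_size [:: a; b]).
  apply: subset_leq_card; apply/subsetP => c _.
  move: (H0 c) => /negbT; rewrite negb_and !negbK => /orP[]/eqP->;
  by rewrite !inE eqxx ?orbT.
by rewrite leqNgt H.
Qed.

Lemma pair_prefix (s0 w : seq Sigma) : 2 < #|Sigma| ->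
  (forall p q, p != q -> has_prefix (hom (prj p q) s0) (hom (prj p q) w)) ->
  has_prefix s0 w.
Proof.
move=> Hc; elim: s0 w => [|a s0 IH] w H; first by exists w.
have [q [Hqa _]] := third a a Hc.
have Haq : a != q by rewrite eq_sym.
have H1 := H a q Haq.
case: w H H1 => [|c w] H H1.
  by case: H1 => r; rewrite !hom_gfilt /= eqxx.
have Hca : c = a.
  case: (eqVneq c a) => [//|Hne]; exfalso.
  have Hac : a != c by rewrite eq_sym.
  have := H a c Hac.
  rewrite !hom_gfilt /= !eqxx /= orbT => -[r [] Hx].
  by move: Hac; rewrite Hx eqxx.
subst c.
have [r Hr] : has_prefix s0 w.
  apply: IH => p q0 Hpq; have [r Hr] := H p q0 Hpq.
  exists r; move: Hr; rewrite !hom_gfilt /=.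
  by case: ((a == p) || (a == q0)) => // -[].
by exists r; rewrite Hr.
Qed.

End Words.


Section Main.
Variable Sigma : finType.
Variable k : nat.
Variable f : ('I_k -> seq Sigma) -> seq Sigma.
Hypothesis Hf : RCP f.
Hypothesis Hc : 2 < #|Sigma|.
Implicit Types (a b c p q r s t u v : Sigma) (w : seq Sigma) (x y z : 'I_k -> seq Sigma).

Lemma rcp h x y : (forall j, hom h (x j) = hom h (y j)) -> hom h (f x) = hom h (f y).
Proof. exact: (Hf (hom_morph h)). Qed.

Lemma f_ext x y : (forall j, x j = y j) -> f x = f y.
Proof.
move=> H; have := @rcp (lift1 id) x y.
rewrite !hom_map !map_id; apply=> j; by rewrite !hom_map !map_id H.
Qed.

Lemma rcp_mrg u v x y : (forall j, map (mr u v) (x j) = map (mr u v) (y j)) ->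
  map (mr u v) (f x) = map (mr u v) (f y).
Proof. by move=> H; rewrite -!hom_mrg; apply: rcp => j; rewrite !hom_mrg. Qed.

Lemma rcp_mrgh u v x y : (forall j, map (mr u v) (x j) = map (mr u v) (y j)) ->
  omap (mr u v) (ohead (f x)) = omap (mr u v) (ohead (f y)).
Proof. by move=> /rcp_mrg H; rewrite -!ohead_map H. Qed.

Lemma rcp_ers s x y : (forall j, filter (predC1 s) (x j) = filter (predC1 s) (y j)) ->
  filter (predC1 s) (f x) = filter (predC1 s) (f y).
Proof. by move=> H; rewrite -!hom_gfilt; apply: rcp => j; rewrite !hom_gfilt. Qed.

Definition msr x := \sum_(j < k) size (x j).
Definition upd x j0 w := fun j => if j == j0 then w else x j.

Lemma msr_upd x j0 w : size w < size (x j0) -> msr (upd x j0 w) < msr x.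
Proof.
move=> H; rewrite /msr (bigD1 j0) //= [X in _ < X](bigD1 j0) //= /upd eqxx.
by rewrite (eq_bigr (fun j => size (x j))) ?ltn_add2r // => j /negbTE ->.
Qed.

Lemma msr_ind (P : ('I_k -> seq Sigma) -> Prop) :
  (forall x, (forall y, msr y < msr x -> P y) -> P x) -> forall x, P x.
Proof.
move=> H x; have [n Hn] : exists n, msr x <= n by exists (msr x).
elim: n x Hn => [|n IH] x Hn; apply: H => y Hy.
  by move: (leq_trans Hy Hn).
by apply: IH; rewrite -ltnS (leq_trans Hy Hn).
Qed.


Lemma neq_r (T : eqType) (a b : T) : a != b -> (b == a) = false.
Proof. by rewrite eq_sym => /negbTE. Qed.

Lemma caseII r : f (fun _ => [:: r]) = [::] -> forall x, f x = [::].
Proof.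
move=> Hr.
have HD : forall s, f (fun _ => [:: s]) = [::].
  move=> s; case: (eqVneq s r) => [->//|Hsr].
  have := @rcp_mrg s r (fun _ => [:: s]) (fun _ => [:: r]).
  rewrite Hr /= /mr eqxx (neq_r Hsr) => H.
  by apply: map_nil (mr s r) _ _; apply: H.
have [s1 [Hs1 _]] := third r r Hc.
have [s2 [Hs2 Hs21]] := third r s1 Hc.
have Hbase : forall y, (forall j, y j = [::] \/ y j = [:: r]) -> f y = [::].
  move=> y Hy.
  have Hfill : forall s, s != r -> filter (predC1 s) (f y) = [::].
    move=> s Hsr.
    pose y1 := fun j => if y j == [::] then [:: s] else y j.
    have H1 : f y1 = [::].
      apply: (map_nil (g := mr s r)).
      rewrite (@rcp_mrg s r y1 (fun _ => [:: r])) ?HD // => j.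
      rewrite /y1; case: (Hy j) => ->; by rewrite /= /mr ?eqxx ?(neq_r Hsr).
    rewrite (@rcp_ers s y y1) ?H1 // => j.
    rewrite /y1; case: (Hy j) => -> /=; by rewrite ?eqxx ?(neq_r Hsr).
  apply: (filt_two Hs21); apply: Hfill => //.
have Hun : forall y, (forall j, all (pred1 r) (y j)) -> f y = [::].
  elim/msr_ind => y IH Hy.
  case: (pickP (fun j => 1 < size (y j))) => [j0 Hj0|Hsm]; last first.
    apply: Hbase => j; move: (Hsm j) (Hy j); case: (y j) => [|c [|d w]] //=.
      by left.
    by rewrite andbT => _ /eqP->; right.
  pose z := upd y j0 [:: s1].
  have Hz : f z = [::].
    apply: (map_nil (g := mr s1 r)).
    rewrite (@rcp_mrg s1 r z (upd y j0 [:: r])); last first.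
      move=> j; rewrite /z /upd; case: (j == j0) => //=.
      by rewrite /mr eqxx (neq_r Hs1).
    rewrite IH //; first by apply: msr_upd.
    move=> j; rewrite /upd; case: (j == j0) => //=; by rewrite eqxx.
  have Hnr : s1 \notin y j0.
    apply/negP => Hin; move: (allP (Hy j0) _ Hin) => /= /eqP Hx.
    by move: Hs1; rewrite Hx eqxx.
  apply: (@hom_sbs_nil _ s1 (y j0)); first by case: (y j0) Hj0.
  rewrite (@rcp (sbs s1 (y j0)) y z) ?Hz // => j.
  rewrite /z /upd; case: eqP => [->|_]; first by rewrite hom_sbs1 hom_sbs_id.
  by [].
move=> x; apply: (map_nil (g := fun _ => r)).
rewrite -hom_map (@rcp _ x (fun j => map (fun _ => r) (x j))).
  rewrite Hun //; move=> j; apply/allP => c /mapP[d _ ->] /=; exact: eqxx.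
by move=> j; rewrite !hom_map -map_comp.
Qed.

Lemma mrg_head2 u v o : omap (mr u v) o = Some v -> o = Some v \/ o = Some u.
Proof.
case: o => //= c [] ; rewrite /mr; case: (eqVneq c u) => [->|]; first by right.
by move=> _ ->; left.
Qed.

Lemma map_mr_id u v w : u \notin w -> map (mr u v) w = w.
Proof.
elim: w => //= c w IH; rewrite in_cons negb_or => /andP[H1 H2].
by rewrite IH // /mr eq_sym (negbTE H1).
Qed.

Lemma all1_map c w : all (pred1 c) w -> map (fun _ => c) w = w.
Proof. by elim: w => //= d w IH /andP[/eqP-> /IH->]. Qed.

Lemma all1_notin c d w : all (pred1 c) w -> d != c -> d \notin w.
Proof.
move=> /allP H Hdc; apply/negP => /H /= /eqP Hx.
by move: Hdc; rewrite Hx eqxx.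
Qed.

Lemma all1_head c w : all (pred1 c) w -> w != [::] -> ohead w = Some c.
Proof. by case: w => //= d w /andP[/eqP->]. Qed.

Lemma caseI r b : b != r -> ohead (f (fun _ => [:: r])) = Some b ->
  forall x, has_prefix [:: b] (f x).
Proof.
move=> Hbr Hr.
have HD : forall s, s != b -> ohead (f (fun _ => [:: s])) = Some b.
  move=> s Hsb; case: (eqVneq s r) => [->//|Hsr].
  have := @rcp_mrgh s r (fun _ => [:: s]) (fun _ => [:: r]).
  rewrite Hr /= /mr eqxx (neq_r Hsr) (neq_r Hsb) => H.
  by apply: (mrg_head (u := s) (v := r)) Hbr; rewrite H.
have He : ohead (f (fun _ => [::])) = Some b.
  have Hers : forall u, u != b -> ohead (f (fun _ => [::])) = Some b \/
      ohead (f (fun _ => [::])) = Some u.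
    move=> u Hub; apply: (ers_head (s := u) (w2 := f (fun _ => [:: u]))); last by rewrite eq_sym.
      by apply: rcp_ers => j /=; rewrite eqxx.
    exact: HD.
  have [u1 [Hu1 _]] := third b b Hc.
  have [u2 [Hu2 Hu21]] := third b u1 Hc.
  case: (Hers u1 Hu1) => // H1; case: (Hers u2 Hu2) => // H2.
  by move: Hu21; rewrite H1 in H2; case: H2 => ->; rewrite eqxx.
have Hone : forall t y, t != b -> (forall j, y j = [::] \/ y j = [:: t]) ->
    ohead (f y) = Some b.
  move=> t y Htb Hy.
  have [u [Hub Hut]] := third b t Hc.
  pose y1 := fun j => if y j == [::] then [:: u] else y j.
  have H1 : ohead (f y1) = Some b.
    apply: (mrg_head (u := u) (v := t)); last by rewrite eq_sym.
    rewrite (@rcp_mrgh u t y1 (fun _ => [:: t])) ?HD // /=; last first.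
      move=> j; rewrite /y1; case: (Hy j) => -> /=; by rewrite /mr ?eqxx ?(neq_r Hut).
    by rewrite /mr (neq_r Hub).
  have Hbu : b != u by rewrite eq_sym.
  have Hbt : b != t by rewrite eq_sym.
  have Hf1 : filter (predC1 u) (f y) = filter (predC1 u) (f y1).
    apply: rcp_ers => j; rewrite /y1; case: (Hy j) => -> /=; by rewrite ?eqxx ?(neq_r Hut).
  have [//|Hu] := ers_head Hf1 H1 Hbu.
  have Hf2 : filter (predC1 t) (f y) = filter (predC1 t) (f (fun _ => [::])).
    by apply: rcp_ers => j; case: (Hy j) => -> /=; rewrite ?eqxx.
  case: (ers_head Hf2 He Hbt); rewrite Hu => -[] Hx.
    by move: Hub; rewrite Hx eqxx.
  by move: Hut; rewrite Hx eqxx.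
have Hun : forall q y, q != b -> (forall j, all (pred1 q) (y j)) ->
    ohead (f y) = Some b.
  move=> q; elim/msr_ind => y IH Hqb Hy.
  case: (pickP (fun j => 1 < size (y j))) => [j0 Hj0|Hsm]; last first.
    apply: (Hone q) => // j; move: (Hsm j) (Hy j); case: (y j) => [|c [|d w]] //=.
      by left.
    by rewrite andbT => _ /eqP->; right.
  have [u [Hub Huq]] := third b q Hc.
  pose z := upd y j0 [:: u].
  have Hz : ohead (f z) = Some b.
    apply: (mrg_head (u := u) (v := q)); last by rewrite eq_sym.
    rewrite (@rcp_mrgh u q z (upd y j0 [:: q])); last first.
      move=> j; rewrite /z /upd; case: (j == j0) => //=.
      by rewrite /mr eqxx (neq_r Huq).
    rewrite IH //=; first by rewrite /mr (neq_r Hub).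
      by apply: msr_upd.
    move=> j; rewrite /upd; case: (j == j0) => //=; by rewrite eqxx.
  have Hj0n : y j0 != [::] by case: (y j0) Hj0.
  case: (sbs_head (s := u) (w0 := y j0) (w1 := f y) (w2 := f z) (r := b)) => //.
  - apply: rcp => j; rewrite /z /upd; case: eqP => [->|_] //.
    by rewrite hom_sbs1 hom_sbs_id // (all1_notin (Hy j0)).
  - by rewrite eq_sym.
  - move=> [_]; rewrite (all1_head (Hy j0) Hj0n) => -[] Hx.
    by move: Hqb; rewrite Hx eqxx.
have Hb : forall y, (forall j, all (pred1 b) (y j)) -> ohead (f y) = Some b.
  move=> y Hy.
  have Hu : forall u, u != b -> ohead (f y) = Some b \/ ohead (f y) = Some u.
    move=> u Hub; apply: mrg_head2.
    rewrite -(@rcp_mrgh u b (fun j => map (fun _ => u) (y j))).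
      rewrite (Hun u) //=; first by rewrite /mr; case: (b == u).
      move=> j; apply/allP => c /mapP[d _ ->] /=; exact: eqxx.
    move=> j; rewrite -map_comp map_mr_id ?(all1_notin (Hy j)) //.
    rewrite -[RHS](all1_map (Hy j)); apply: eq_map => c.
    by rewrite /= /mr eqxx.
  have [u1 [Hu1 _]] := third b b Hc.
  have [u2 [Hu2 Hu21]] := third b u1 Hc.
  case: (Hu u1 Hu1) => // H1; case: (Hu u2 Hu2) => // H2.
  by move: Hu21; rewrite H1 in H2; case: H2 => ->; rewrite eqxx.
have Hpair : forall q y, q != b ->
    (forall j, all (fun c => (c == b) || (c == q)) (y j)) -> ohead (f y) = Some b.
  move=> q y Hqb Hy.
  have [u [Hub Huq]] := third b q Hc.
  have E1 := neq_r Hqb; have E2 := neq_r Huq; have E3 := neq_r Hub.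
  have E4 : (q == b) = false by apply: negbTE.
  have Hy'' : ohead (f (fun j => map (fun _ => q) (y j))) = Some b.
    apply: (Hun q) => // j; apply/allP => c /mapP[d _ ->] /=; exact: eqxx.
  have Hy' : ohead (f (fun j => map (mr b u) (y j))) = Some b.
    apply: (mrg_head (u := u) (v := q)); last by rewrite E1.
    rewrite (rcp_mrgh (y := fun j => map (fun _ => q) (y j))) ?Hy'' /= /mr ?E3 //.
    move=> j; rewrite -!map_comp; apply/eq_in_map => c Hcin.
    by move: (allP (Hy j) c Hcin) => /orP[]/eqP-> /=; rewrite /mr ?eqxx /= ?E1 ?E2 ?E3 ?E4 /= ?eqxx ?E1 ?E2 ?E3 ?E4.
  have [//|Hu] : ohead (f y) = Some b \/ ohead (f y) = Some u.
    apply: mrg_head2.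
    rewrite -(rcp_mrgh (x := fun j => map (mr b u) (y j))) ?Hy' /= /mr ?E3 //.
    move=> j; rewrite -!map_comp; apply/eq_in_map => c Hcin.
    by move: (allP (Hy j) c Hcin) => /orP[]/eqP-> /=; rewrite /mr ?eqxx /= ?E1 ?E2 ?E3 ?E4 /= ?eqxx ?E1 ?E2 ?E3 ?E4.
  pose yq := fun j => filter (predC1 q) (y j).
  have Hyq : ohead (f yq) = Some b.
    apply: Hb => j; apply/allP => c; rewrite mem_filter => /andP[/= Hcq Hcin].
    by move: (allP (Hy j) c Hcin) => /orP[] // /eqP Hx; move: Hcq; rewrite Hx eqxx.
  have Hf3 : filter (predC1 q) (f y) = filter (predC1 q) (f yq).
    by apply: rcp_ers => j; rewrite /yq filter_id.
  by case: (ers_head Hf3 Hyq (negbT E1)); rewrite Hu => -[] Hx;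
    [move: Hub | move: Huq]; rewrite Hx eqxx.
move=> x; apply: pair_prefix Hc _ => p q Hpq.
pose xp := fun j => hom (prj p q) (x j).
have E : hom (prj p q) (f x) = hom (prj p q) (f xp).
  by apply: rcp => j; rewrite /xp !hom_gfilt filter_id.
rewrite E; case Hbpq: ((b == p) || (b == q)); last first.
  by exists (hom (prj p q) (f xp)); rewrite hom1 /prj /gfilt Hbpq.
have [q' [Hq'b Hq']] : exists q', q' != b /\
    forall c, (c == p) || (c == q) -> (c == b) || (c == q').
  case: (eqVneq b p) Hbpq => [Ebp _|Hbp /= /eqP Hbq].
    exists q; split; first by rewrite Ebp eq_sym.
    by rewrite Ebp.
  exists p; split; first by rewrite eq_sym.
  move=> c /orP[->|/eqP->]; first by rewrite orbT.
  by rewrite Hbq eqxx.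
have Hxp : ohead (f xp) = Some b.
  apply: (Hpair q' xp Hq'b) => j; apply/allP => c.
  rewrite /xp hom_gfilt mem_filter => /andP[H _]; exact: Hq'.
case: (f xp) Hxp => //= c w [->]; exists (hom (prj p q) w).
by rewrite hom_cons hom1.
Qed.

Definition pat r p (S : pred 'I_k) := fun j => if S j then [:: r] else [:: p].

Lemma lead p w : exists j rest, w = nseq j p ++ rest /\ ohead rest != Some p.
Proof.
elim: w => [|c w [j [rest [-> H]]]]; first by exists 0, [::].
case: (eqVneq c p) => [->|Hcp]; first by exists j.+1, rest.
by exists 0, (c :: nseq j p ++ rest); split.
Qed.

Lemma caseIII : (forall r, ohead (f (fun _ => [:: r])) = Some r) ->
  exists i, forall x, has_prefix (x i) (f x).
Proof.
move=> HD.
have pat_head : forall r p S, r != p ->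
    ohead (f (pat r p S)) = Some p \/ ohead (f (pat r p S)) = Some r.
  move=> r p S Hrp; apply: mrg_head2.
  rewrite (rcp_mrgh (y := fun _ => [:: p])) ?HD /= /mr ?(neq_r Hrp) //.
  by move=> j; rewrite /pat; case: (S j); rewrite /= /mr ?eqxx ?(neq_r Hrp).
have pat_ext : forall r p S S', (forall j, S j = S' j) ->
    f (pat r p S) = f (pat r p S').
  by move=> r p S S' H; apply: f_ext => j; rewrite /pat H.
pose g r p S := ohead (f (pat r p S)) = Some r.
have tr1 : forall r u p S, r != u -> r != p -> g r u S -> g r p S.
  move=> r u p S Hru Hrp; rewrite /g.
  case: (eqVneq u p) => [->//|Hup] Hg.
  apply: (mrg_head (u := u) (v := p)) => //.
  rewrite -(@rcp_mrgh u p (pat r u S)) ?Hg /= /mr ?(negbTE Hru) //.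
  by move=> j; rewrite /pat; case: (S j) => //=; rewrite /mr eqxx (neq_r Hup).
have tr2 : forall u r p S, u != p -> r != p -> u != r -> g u p S -> g r p S.
  move=> u r p S Hup Hrp Hur; rewrite /g => Hg.
  have Hprem : forall j, map (mr u r) (pat u p S j) = map (mr u r) (pat r p S j).
    move=> j; rewrite /pat; case: (S j) => //=; by rewrite /mr eqxx (neq_r Hur).
  have H := rcp_mrgh Hprem; rewrite Hg /= /mr eqxx in H.
  case: (pat_head r p S Hrp) => E //; rewrite E /= (neq_r Hup) in H.
  by case: H => Hx; move: Hrp; rewrite Hx eqxx.
have trans : forall r p r' p' S, r != p -> r' != p' -> g r p S -> g r' p' S.
  move=> r p r' p' S Hrp Hrp' H.
  have [w [Hwr Hwr']] := third r r' Hc.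
  have Hrw : r != w by rewrite eq_sym.
  have Hrw' : r' != w by rewrite eq_sym.
  apply: (tr1 r' w) => //; have {H} H := tr1 r p w S Hrp Hrw H.
  case: (eqVneq r r') => [<-//|Hrr]; exact: (tr2 r r' w S).
have disj : forall r u p A B, r != u -> r != p -> u != p -> g r p A -> g u p B ->
    (forall j, ~~ (A j && B j)) -> False.
  move=> r u p A B Hru Hrp Hup HA HB Hd.
  pose y := fun j => if A j then [:: r] else if B j then [:: u] else [:: p].
  have H1 : ohead (f y) = Some r.
    apply: (mrg_head (u := u) (v := p)) => //.
    rewrite (@rcp_mrgh u p y (pat r p A)) ?HA /= /mr ?(negbTE Hru) //.
    move=> j; rewrite /y /pat; case: (A j) => //=; case: (B j) => //=;
      by rewrite /mr ?eqxx ?(neq_r Hup).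
  have Hprem : forall j, map (mr r p) (y j) = map (mr r p) (pat u p B j).
    move=> j; rewrite /y /pat; move: (Hd j); case: (A j) => /=.
      by move/negbTE => ->; rewrite /= /mr eqxx (neq_r Hrp).
    by case: (B j).
  have H := rcp_mrgh Hprem; rewrite H1 HB /= /mr eqxx (neq_r Hru) in H.
  by case: H => Hx; move: Hup; rewrite Hx eqxx.
have inter : forall r p S T, r != p -> g r p S -> g r p T ->
    g r p (fun j => S j && T j).
  move=> r p S T Hrp HS HT.
  have [u [Hur Hup]] := third r p Hc.
  pose y := fun j => if S j && T j then [:: r] else if S j then [:: u] else [:: p].
  have [H1|H1] : ohead (f y) = Some r \/ ohead (f y) = Some u.
    apply: mrg_head2.
    rewrite (@rcp_mrgh u r y (pat r p S)) ?HS /= /mr ?(neq_r Hur) //.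
    move=> j; rewrite /y /pat; case: (S j); case: (T j) => //=;
      by rewrite /mr ?eqxx ?(neq_r Hur) ?(neq_r Hup).
  - apply: (mrg_head (u := u) (v := p)) => //.
    rewrite -(@rcp_mrgh u p y) ?H1 /= /mr ?(neq_r Hur) //.
    move=> j; rewrite /y /pat; case: (S j); case: (T j) => //=;
      by rewrite /mr ?eqxx ?(neq_r Hur) ?(neq_r Hup).
  - have Hg : g u p (fun j => S j && ~~ T j).
      apply: (mrg_head (u := r) (v := p)) => //.
      rewrite -(@rcp_mrgh r p y) ?H1 /= /mr ?(negbTE Hur) //.
      move=> j; rewrite /y /pat; case: (S j); case: (T j) => //=;
        by rewrite /mr ?eqxx ?(neq_r Hur) ?(neq_r Hrp).
    exfalso; apply: (disj r u p T _ _ _ _ HT Hg) => //; first by rewrite eq_sym.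
    by move=> j; case: (T j); rewrite ?andbF.
have compl : forall r p S, r != p -> ~ g r p S -> g p r (fun j => ~~ S j).
  move=> r p S Hrp Hn; rewrite /g.
  have -> : f (pat p r (fun j => ~~ S j)) = f (pat r p S).
    by apply: f_ext => j; rewrite /pat; case: (S j).
  by case: (pat_head r p S Hrp).
have [a _] : exists a : Sigma, a \in Sigma.
  by apply/card_gt0P; apply: leq_trans Hc.
have [b [Hba _]] := third a a Hc.
have Hab : a != b by rewrite eq_sym.
have [i Hi] : exists i, g a b (pred1 i).
  case: (pickP (fun i => ohead (f (pat a b (pred1 i))) == Some a)) => [i /eqP Hi|Hn].
    by exists i.
  have Hc1 : forall i, g b a (fun j => ~~ (j == i)).
    move=> i; apply: compl => //; rewrite /g => /eqP Hx.
    by move: (Hn i); rewrite Hx.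
  have Hl : forall l : seq 'I_k, g b a (fun j => j \notin l).
    elim=> [|i l IH].
      by rewrite /g (pat_ext _ _ _ (fun _ => true)) // HD.
    rewrite /g (pat_ext _ _ _ (fun j => (j \notin l) && ~~ (j == i))).
      exact: inter.
    by move=> j; rewrite in_cons negb_or andbC.
  have := Hl (enum 'I_k); rewrite /g (pat_ext _ _ _ (fun _ => false)).
    by rewrite /pat HD => -[] Hx; move: Hab; rewrite Hx eqxx.
  by move=> j; rewrite mem_enum.
exists i.
have B : forall r p, r != p -> ohead (f (fun j => if j == i then [:: r] else [:: p])) = Some r.
  move=> r p Hrp; exact: (trans a b r p (pred1 i)).
pose dl r := fun j : 'I_k => if j == i then [:: r] else [::].
have Hdelta : forall r, ohead (f (dl r)) = Some r.
  move=> r; have [p [Hpr Hpt]] := third r (odflt r (ohead (f (dl r)))) Hc.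
  have Hrp : r != p by rewrite eq_sym.
  have Hf1 : filter (predC1 p) (f (dl r)) =
      filter (predC1 p) (f (fun j => if j == i then [:: r] else [:: p])).
    apply: rcp_ers => j; rewrite /dl; case: (j == i) => /=; by rewrite ?eqxx.
  case: (ers_head Hf1 (B r p Hrp) Hrp) => // Hx.
  by move: Hpt; rewrite Hx /= eqxx.
have S1 : forall r u y, u != r -> y i = [:: r] ->
    (forall j, j != i -> y j = [::] \/ y j = [:: u]) -> ohead (f y) = Some r.
  move=> r u y Hur Hyi Hy.
  have Hru : r != u by rewrite eq_sym.
  have Hf1 : filter (predC1 u) (f y) = filter (predC1 u) (f (dl r)).
    apply: rcp_ers => j; rewrite /dl; case: (eqVneq j i) => [->|Hji].
      by rewrite Hyi.
    by case: (Hy j Hji) => -> /=; rewrite ?eqxx.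
  case: (ers_head Hf1 (Hdelta r) Hru) => // Hyu.
  have [q [Hqu Hqr]] := third u r Hc.
  pose zs := fun j => if y j == [::] then [:: q] else y j.
  have Hzs : ohead (f zs) = Some r.
    apply: (mrg_head (u := q) (v := u)) => //.
    rewrite (@rcp_mrgh q u zs (fun j => if j == i then [:: r] else [:: u])) ?B //=.
      by rewrite /mr (neq_r Hqr).
    move=> j; rewrite /zs; case: (eqVneq j i) => [->|Hji].
      by rewrite Hyi ?eqxx /= /mr (neq_r Hqr).
    case: (Hy j Hji) => -> /=; by rewrite /mr ?eqxx ?(neq_r Hqu).
  have Hf2 : filter (predC1 q) (f y) = filter (predC1 q) (f zs).
    apply: rcp_ers => j; rewrite /zs; case: eqP => [->|_] //=; by rewrite ?eqxx.
  have Hrq : r != q by rewrite eq_sym.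
  case: (ers_head Hf2 Hzs Hrq) => //; rewrite Hyu => -[] Hx.
  by move: Hqu; rewrite Hx eqxx.
have H1 : forall u r y, u != r -> y i = [:: r] ->
    (forall j, j != i -> all (pred1 u) (y j)) -> ohead (f y) = Some r.
  move=> u r; elim/msr_ind => y IH Hur Hyi Hy.
  case: (pickP (fun j => 1 < size (y j))) => [j0 Hj0|Hsm]; last first.
    apply: (S1 r u) => // j Hji; move: (Hsm j) (Hy j Hji).
    case: (y j) => [|c [|d w]] //=; first by left.
    by rewrite andbT => _ /eqP->; right.
  have Hj0i : j0 != i by apply/eqP => E; move: Hj0; rewrite E Hyi.
  have [s [Hsu Hsr]] := third u r Hc.
  pose z := upd y j0 [:: s].
  have Hy' : ohead (f (upd y j0 [:: u])) = Some r.
    apply: IH => //; first exact: msr_upd.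
      by rewrite /upd (neq_r Hj0i).
    move=> j Hji; rewrite /upd; case: (j == j0) => /=; [by rewrite eqxx | exact: Hy].
  have Hz : ohead (f z) = Some r.
    apply: (mrg_head (u := s) (v := u)); last by rewrite eq_sym.
    rewrite (@rcp_mrgh s u z (upd y j0 [:: u])) ?Hy' /= /mr ?(neq_r Hsr) //.
    move=> j; rewrite /z /upd; case: (j == j0) => //=; by rewrite /mr eqxx (neq_r Hsu).
  have Hj0n : y j0 != [::] by case: (y j0) Hj0.
  have Hrs : r != s by rewrite eq_sym.
  have E : hom (sbs s (y j0)) (f y) = hom (sbs s (y j0)) (f z).
    apply: rcp => j; rewrite /z /upd; case: eqP => [->|_] //.
    by rewrite hom_sbs1 hom_sbs_id // (all1_notin (Hy j0 Hj0i)).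
  case: (sbs_head E Hz Hrs Hj0n) => //.
  move=> [_]; rewrite (all1_head (Hy j0 Hj0i) Hj0n) => -[] Hx.
  by move: Hur; rewrite Hx eqxx.
have H2 : forall p q r y, p != q -> p != r -> q != r -> y i = [:: r] ->
    (forall j, j != i -> all (fun c => (c == p) || (c == q)) (y j)) ->
    ohead (f y) = Some r.
  move=> p q r y Hpq Hpr Hqr Hyi Hy.
  have Hers : forall s o, s != r -> o != r ->
      (forall j, j != i -> all (fun c => (c == o) || (c == s)) (y j)) ->
      ohead (f y) = Some r \/ ohead (f y) = Some s.
    move=> s o Hsr Hor Hy'; pose ys := fun j => filter (predC1 s) (y j).
    have Hys : ohead (f ys) = Some r.
      apply: (H1 o) => //; first by rewrite /ys Hyi /= (neq_r Hsr).
      move=> j Hji; apply/allP => c; rewrite mem_filter => /andP[/= Hcs Hc'].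
      move: (allP (Hy' j Hji) c Hc') => /orP[] // /eqP Hx.
      by move: Hcs; rewrite Hx eqxx.
    apply: (ers_head (w2 := f ys)) => //; last by rewrite eq_sym.
    by apply: rcp_ers => j; rewrite /ys filter_id.
  case: (Hers q p Hqr Hpr Hy) => // E1.
  case: (Hers p q Hpr Hqr) => //.
    by move=> j Hji; apply/allP => c Hc'; rewrite orbC; exact: (allP (Hy j Hji)).
  by rewrite E1 => -[] Hx; move: Hpq; rewrite Hx eqxx.
have H3 : forall p y, (forall j, all (pred1 p) (y j)) -> has_prefix (y i) (f y).
  move=> p y Hy.
  have Eyi : y i = nseq (size (y i)) p by apply/all_pred1P.
  have [j [rest [Efy Hrest]]] := lead p (f y).
  case: (leqP (size (y i)) j) => Hmj.
    exists (nseq (j - size (y i)) p ++ rest).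
    by rewrite Efy {1}Eyi catA -nseqD subnKC.
  have [s [Hsp Hst]] := third p (odflt p (ohead rest)) Hc.
  have Hps : p != s by rewrite eq_sym.
  pose z := upd y i [:: s].
  have Hz : ohead (f z) = Some s.
    apply: (H1 p) => //; first by rewrite /z /upd eqxx.
    by move=> j' Hj'; rewrite /z /upd (negbTE Hj').
  have E : hom (sbs s (y i)) (f z) = hom (sbs s (y i)) (f y).
    apply: rcp => j'; rewrite /z /upd; case: eqP => [->|_] //.
    by rewrite hom_sbs1 hom_sbs_id // (all1_notin (Hy i)).
  have Hsn : s \notin nseq j p by rewrite mem_nseq negb_and Hsp orbT.
  move: E; case: (f z) Hz => //= c w [->]; rewrite hom_cons /sbs eqxx.
  rewrite Efy hom_cat (hom_sbs_id _ Hsn) {1}Eyi -(subnKC (ltnW Hmj)) nseqD -catA.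
  move/eqP; rewrite eqseq_cat // => /andP[_ /eqP].
  have : 0 < size (y i) - j by rewrite subn_gt0.
  case: (size (y i) - j) => [//|d] _ /=.
  case: rest Hrest Hst {Efy} => [|c' rest] //= Hc'p Hsc'.
  rewrite hom_cons /sbs eq_sym (negbTE Hsc') /= => -[] Hx.
  by move: Hc'p; rewrite Hx eqxx.
have H4 : forall p q x, p != q ->
    (forall j, all (fun c => (c == p) || (c == q)) (x j)) -> has_prefix (x i) (f x).
  move=> p q x Hpq Hx.
  pose y := fun j => map (fun _ => p) (x j).
  have Hmp : forall w, map (mr q p) (map (fun _ => p) w) = map (fun _ => p) w.
    by move=> w; rewrite -map_comp; apply: eq_map => c; rewrite /= /mr; case: (p == q).
  have Hyp : has_prefix (y i) (f y).
    by apply: (H3 p) => j; apply/allP => c /mapP[d _ ->] /=; exact: eqxx.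
  have Hm : map (mr q p) (f x) = map (mr q p) (f y).
    apply: rcp_mrg => j; rewrite /y Hmp; apply/eq_in_map => c Hcin.
    move: (allP (Hx j) c Hcin) => /orP[]/eqP-> /=; rewrite /mr ?eqxx //.
    by case: (p == q).
  case: Hyp => R ER.
  have Hsyi : size (y i) = size (x i) by rewrite size_map.
  have Hm2 : map (mr q p) (f x) = y i ++ map (mr q p) R.
    by rewrite Hm ER map_cat /y Hmp.
  have Hsz : size (x i) <= size (f x).
    by have := congr1 size Hm2; rewrite size_map size_cat Hsyi => ->; exact: leq_addr.
  have [r [Hrp Hrq]] := third p q Hc.
  have Hrn : r \notin take (size (x i)) (f x).
    apply/negP => Hin.
    have : mr q p r \in y i.
      have -> : y i = take (size (x i)) (map (mr q p) (f x)).
        by rewrite Hm2 take_size_cat.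
      by rewrite -map_take; apply: map_f.
    by case/mapP => d _; rewrite /mr (negbTE Hrq) => Hx'; move: Hrp; rewrite Hx' eqxx.
  have Hrx : forall j, r \notin x j.
    move=> j; apply/negP => Hin; move: (allP (Hx j) r Hin) => /orP[]/eqP Hx'.
      by move: Hrp; rewrite Hx' eqxx.
    by move: Hrq; rewrite Hx' eqxx.
  have Hz : ohead (f (upd x i [:: r])) = Some r.
    apply: (H2 p q) => //; try by rewrite eq_sym.
      by rewrite /upd eqxx.
    by move=> j Hji; rewrite /upd (negbTE Hji).
  have E : hom (sbs r (x i)) (f (upd x i [:: r])) = hom (sbs r (x i)) (f x).
    apply: rcp => j; rewrite /upd; case: eqP => [->|_] //.
    by rewrite hom_sbs1 hom_sbs_id.
  move: E; case: (f (upd x i [:: r])) Hz => //= c w [->]; rewrite hom_cons /sbs eqxx.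
  rewrite -{1}(cat_take_drop (size (x i)) (f x)) hom_cat (hom_sbs_id _ Hrn).
  move/eqP; rewrite eqseq_cat ?size_takel // => /andP[/eqP Hxi _].
  exists (drop (size (x i)) (f x)).
  by rewrite -{1}(cat_take_drop (size (x i)) (f x)) -Hxi.
move=> x; apply: pair_prefix Hc _ => p q Hpq.
pose xp := fun j => hom (prj p q) (x j).
have E : hom (prj p q) (f x) = hom (prj p q) (f xp).
  by apply: rcp => j; rewrite /xp !hom_gfilt filter_id.
have [R ER] : has_prefix (xp i) (f xp).
  apply: (H4 p q) => // j; apply/allP => c.
  by rewrite /xp hom_gfilt mem_filter => /andP[].
exists (hom (prj p q) R).
by rewrite E ER hom_cat /xp !hom_gfilt filter_id.
Qed.

End Main.
Theorem mainTheorem18 (Sigma : finType) (k : nat) (f : ('I_k -> seq Sigma) -> seq Sigma) :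
  2 < #|Sigma| -> 0 < k -> RCP f ->
  let C1 := exists b : Sigma, forall x : 'I_k -> seq Sigma, has_prefix [:: b] (f x) in
  let C2 := exists i : 'I_k, forall x : 'I_k -> seq Sigma, has_prefix (x i) (f x) in
  let C3 := forall x : 'I_k -> seq Sigma, f x = [::] in
  (C1 \/ C2 \/ C3) /\ ~ (C1 /\ C2) /\ ~ (C1 /\ C3) /\ ~ (C2 /\ C3).
Proof.
move=> Hcard Hk HRCP C1 C2 C3; rewrite /C1 /C2 /C3.
have [a _] : exists a : Sigma, a \in Sigma.
  by apply/card_gt0P; apply: leq_trans Hcard.
split.
  case: (pickP (fun r : Sigma => ohead (f (fun _ => [:: r])) != Some r)) => [r Hr|Hall].
    case E: (ohead (f (fun _ => [:: r]))) => [b|].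
      left; exists b; apply: (caseI HRCP Hcard (r := r)) => //.
      by apply/eqP => Ebr; move: Hr; rewrite E Ebr eqxx.
    right; right; apply: (caseII HRCP Hcard (r := r)).
    by case: (f (fun _ => [:: r])) E.
  right; left; apply: (caseIII HRCP Hcard) => r.
  by move: (Hall r) => /negbFE/eqP.
split; [case=> [[b Hb] [i Hi]] | split; [case=> [[b Hb] H3] | case=> [[i Hi] H3]]].
- have [c [Hcb _]] := third b b Hcard.
  case: (Hb (fun _ => [:: c])) => r1 E1; case: (Hi (fun _ => [:: c])) => r2.
  by rewrite E1 => -[] Hx; move: Hcb; rewrite Hx eqxx.
- by case: (Hb (fun _ => [:: a])) => r1; rewrite H3.
- by case: (Hi (fun _ => [:: a])) => r1; rewrite H3.
Qed.
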